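(* Let $\mathcal{P}\subset\mathbb{R}^3$ be a polyhedron with radius $1$ and let $P_1,P_2,P_3,Q_1,Q_2,Q_3\in\mathcal{P}$ (not necessarily distinct) such that the triples $(P_1,P_2,P_3)$ and $(Q_1,Q_2,Q_3)$ are congruent. Let $\varepsilon>0$ and $\bar\theta_1,\bar\varphi_1,\bar\theta_2,\bar\varphi_2,\bar\alpha\in\mathbb{R}$; set $\overline{X_k}=X(\bar\theta_k,\bar\varphi_k)$, $\overline{M_k}=M(\bar\theta_k,\bar\varphi_k)$ for $k=1,2$. Assume: (A) there exist $\sigma_P,\sigma_Q\in\{0,1\}$ with $(-1)^{\sigma_P}\langle\overline{X_1},P_i\rangle>\sqrt2\varepsilon$ and $(-1)^{\sigma_Q}\langle\overline{X_2},Q_i\rangle>\sqrt2\varepsilon$ for $i=1,2,3$; (S) $P_1,P_2,P_3$ are $\varepsilon$-spanning for $(\bar\theta_1,\bar\varphi_1)$ and $Q_1,Q_2,Q_3$ are $\varepsilon$-spanning for $(\bar\theta_2,\bar\varphi_2)$; (B) there are $r>0$ with $\min_{i=1,2,3}\|\overline{M_2}Q_i\|>r+\sqrt2\varepsilon$ and $\delta\in\mathbb{R}$ with $\delta\ge\max_{i=1,2,3}\|R(\bar\alpha)\overline{M_1}P_i-\overline{M_2}Q_i\|/2$, such that for all $i=1,2,3$ and every $Q_j\in\mathcal{P}\setminus\{Q_i\}$, \[ \frac{\langle\overline{M_2}Q_i,\overline{M_2}(Q_i-Q_j)\rangle-2\varepsilon\|Q_i-Q_j\|(\sqrt2+\varepsilon)}{(\|\overline{M_2}Q_i\|+\sqrt2\varepsilon)(\|\overline{M_2}(Q_i-Q_j)\|+2\sqrt2\varepsilon)}>\frac{\sqrt5\varepsilon+\delta}{r}.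 \] Then there is no $(\theta_1,\varphi_1,\theta_2,\varphi_2,\alpha)$ with $|\theta_k-\bar\theta_k|,|\varphi_k-\bar\varphi_k|,|\alpha-\bar\alpha|\le\varepsilon$ ($k=1,2$) such that $R(\alpha)M(\theta_1,\varphi_1)\mathcal{P}\subset\operatorname{int}\operatorname{conv}(M(\theta_2,\varphi_2)\mathcal{P})$.
   Context: $R(\alpha)=\begin{pmatrix}\cos\alpha&-\sin\alpha\\ \sin\alpha&\cos\alpha\end{pmatrix}$; $X(\theta,\varphi)=(\cos\theta\sin\varphi,\sin\theta\sin\varphi,\cos\varphi)^t$; $M(\theta,\varphi)=\begin{pmatrix}-\sin\theta&\cos\theta&0\\ -\cos\theta\cos\varphi&-\sin\theta\cos\varphi&\sin\varphi\end{pmatrix}$. A polyhedron is a finite non-degenerate set of points of $\mathbb{R}^3$ in convex position; radius $1$ means all its points have norm $\le1$ with equality for some. Triples $(P_1,P_2,P_3)$, $(Q_1,Q_2,Q_3)$ in $\mathbb{R}^3$ are congruent if there is an orthonormal $L\in\mathbb{R}^{3\times3}$ with $P_i=LQ_i$ for $i=1,2,3$. Given $\theta,\varphi\in\mathbb{R}$, $\varepsilon>0$ and $M=M(\theta,\varphi)$, points $P_1,P_2,P_3\in\mathbb{R}^3$ with norms $\le1$ are $\varepsilon$-spanning for $(\theta,\varphi)$ if $\langle R(\pi/2)MP_1,MP_2\rangle$, $\langle R(\pi/2)MP_2,MP_3\rangle$, $\langle R(\pi/2)MP_3,MP_1\rangle$ are all $>2\varepsilon(\sqrt2+\varepsilon)$.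 Matrices act on point sets elementwise; norms of matrices are operator norms. *)

(* Defs.v *)
From Stdlib Require Import Reals List.
Import ListNotations.
Open Scope R_scope.

Record V3 := mkV3 { vx : R; vy : R; vz : R }.
Record V2 := mkV2 { wx : R; wy : R }.

Definition add3 (p q : V3) : V3 := mkV3 (vx p + vx q) (vy p + vy q) (vz p + vz q).
Definition sub3 (p q : V3) : V3 := mkV3 (vx p - vx q) (vy p - vy q) (vz p - vz q).
Definition scal3 (c : R) (p : V3) : V3 := mkV3 (c * vx p) (c * vy p) (c * vz p).
Definition zero3 : V3 := mkV3 0 0 0.
Definition dot3 (p q : V3) : R := vx p * vx q + vy p * vy q + vz p * vz q.
Definition norm3 (p : V3) : R := sqrt (dot3 p p).

Definition add2 (p q : V2) : V2 := mkV2 (wx p + wx q) (wy p + wy q).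
Definition sub2 (p q : V2) : V2 := mkV2 (wx p - wx q) (wy p - wy q).
Definition scal2 (c : R) (p : V2) : V2 := mkV2 (c * wx p) (c * wy p).
Definition zero2 : V2 := mkV2 0 0.
Definition dot2 (p q : V2) : R := wx p * wx q + wy p * wy q.
Definition norm2 (p : V2) : R := sqrt (dot2 p p).

Definition Rot (a : R) (v : V2) : V2 :=
  mkV2 (cos a * wx v - sin a * wy v) (sin a * wx v + cos a * wy v).

Definition Xv (th ph : R) : V3 := mkV3 (cos th * sin ph) (sin th * sin ph) (cos ph).

Definition Mm (th ph : R) (p : V3) : V2 :=
  mkV2 (- sin th * vx p + cos th * vy p)
       (- cos th * cos ph * vx p - sin th * cos ph * vy p + sin ph * vz p).

Definition lincomb3 (l : list (R * V3)) : V3 :=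
  fold_right (fun cq acc => add3 (scal3 (fst cq) (snd cq)) acc) zero3 l.
Definition lincomb2 (l : list (R * V2)) : V2 :=
  fold_right (fun cq acc => add2 (scal2 (fst cq) (snd cq)) acc) zero2 l.
Definition wsum {A} (l : list (R * A)) : R :=
  fold_right (fun cq acc => fst cq + acc) 0 l.

Definition conv3 (S : V3 -> Prop) (x : V3) : Prop :=
  exists l : list (R * V3),
    Forall (fun cq => 0 <= fst cq /\ S (snd cq)) l /\ wsum l = 1 /\ x = lincomb3 l.
Definition conv2 (S : V2 -> Prop) (x : V2) : Prop :=
  exists l : list (R * V2),
    Forall (fun cq => 0 <= fst cq /\ S (snd cq)) l /\ wsum l = 1 /\ x = lincomb2 l.

Definition interior2 (S : V2 -> Prop) (x : V2) : Prop :=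
  exists r, 0 < r /\ forall y, norm2 (sub2 y x) < r -> S y.

Definition det3 (a b c : V3) : R :=
  vx a * (vy b * vz c - vz b * vy c)
  - vy a * (vx b * vz c - vz b * vx c)
  + vz a * (vx b * vy c - vy b * vx c).

(* A polyhedron: a finite set (given as a list) of points of R^3 which is
   non-degenerate (not contained in a plane, i.e. it has four affinely
   independent points) and in convex position (no point lies in the convex
   hull of the other points). *)
Definition polyhedron (Pl : list V3) : Prop :=
  (exists a b c d, In a Pl /\ In b Pl /\ In c Pl /\ In d Pl /\
     det3 (sub3 b a) (sub3 c a) (sub3 d a) <> 0) /\
  (forall p, In p Pl -> ~ conv3 (fun q => In q Pl /\ q <> p) p).

Definition radius1 (Pl : list V3) : Prop :=
  (forall p, In p Pl -> norm3 p <= 1) /\ (exists p, In p Pl /\ norm3 p = 1).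

(* Orthonormal matrix L with columns c1 c2 c3: L q = qx c1 + qy c2 + qz c3 *)
Definition applyL (c1 c2 c3 : V3) (q : V3) : V3 :=
  add3 (scal3 (vx q) c1) (add3 (scal3 (vy q) c2) (scal3 (vz q) c3)).
Definition orthonormal3 (c1 c2 c3 : V3) : Prop :=
  dot3 c1 c1 = 1 /\ dot3 c2 c2 = 1 /\ dot3 c3 c3 = 1 /\
  dot3 c1 c2 = 0 /\ dot3 c1 c3 = 0 /\ dot3 c2 c3 = 0.

(* triples indexed by 0,1,2 *)
Definition congruent (P Q : nat -> V3) : Prop :=
  exists c1 c2 c3, orthonormal3 c1 c2 c3 /\
    forall i, (i < 3)%nat -> P i = applyL c1 c2 c3 (Q i).

Definition eps_spanning (th ph eps : R) (P : nat -> V3) : Prop :=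
  (forall i, (i < 3)%nat -> norm3 (P i) <= 1) /\
  dot2 (Rot (PI/2) (Mm th ph (P 0%nat))) (Mm th ph (P 1%nat)) > 2 * eps * (sqrt 2 + eps) /\
  dot2 (Rot (PI/2) (Mm th ph (P 1%nat))) (Mm th ph (P 2%nat)) > 2 * eps * (sqrt 2 + eps) /\
  dot2 (Rot (PI/2) (Mm th ph (P 2%nat))) (Mm th ph (P 0%nat)) > 2 * eps * (sqrt 2 + eps).

(* Main.v *)
Require Import Defs.
From Stdlib Require Import Reals List.
From Stdlib Require Import Lra Psatz Nsatz Classical.
Open Scope R_scope.

Lemma abs_sin_le x : Rabs (sin x) <= Rabs x.
Proof.
  assert (H: forall y, 0 < y -> Rabs (sin y) <= y).
  { intros y Hy. pose proof (sin_lt_x y Hy). pose proof (SIN_bound y). pose proof PI2_1.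
    destruct (Rle_dec 1 y).
    - apply Rabs_le; lra.
    - assert (0 < sin y) by (apply sin_gt_0; lra). rewrite Rabs_right; lra. }
  destruct (Rtotal_order x 0) as [Hx|[Hx|Hx]].
  - replace x with (- (-x)) by ring. rewrite sin_neg, Rabs_Ropp, Rabs_Ropp. rewrite (Rabs_right (-x)) by lra. apply H; lra.
  - subst; rewrite sin_0, Rabs_R0; lra.
  - rewrite (Rabs_right x) by lra. apply H; lra.
Qed.

Lemma sq_abs a : a * a = Rabs a * Rabs a.
Proof. rewrite <- Rabs_mult. rewrite Rabs_right; nra. Qed.

Lemma one_minus_cos u : 1 - cos u <= u^2/2.
Proof.
  replace u with (2*(u/2)) at 1 by field. rewrite cos_2a_sin.
  pose proof (abs_sin_le (u/2)).
  pose proof (sq_abs (sin (u/2))).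
  assert (u^2/2 = 2 * (Rabs (u/2) * Rabs (u/2))) by (rewrite <- sq_abs; field).
  pose proof (Rabs_pos (sin (u/2))). nra.
Qed.

Lemma psd2 k11 k12 k22 z1 z2 : 0 <= k11 -> 0 <= k22 -> k12 * k12 <= k11 * k22 ->
  0 <= k11 * z1 * z1 + 2 * k12 * z1 * z2 + k22 * z2 * z2.
Proof.
  intros H1 H2 H3.
  destruct (Req_dec k11 0) as [E|E].
  - subst. assert (k12 * k12 = 0) by nra. apply Rmult_integral in H. assert (k12 = 0) by tauto. subst. assert (0 <= k22 * (z2*z2)) by (apply Rmult_le_pos; nra). nra.
  - assert (k11 * (k11 * z1 * z1 + 2 * k12 * z1 * z2 + k22 * z2 * z2) =
            (k11 * z1 + k12 * z2)^2 + (k11 * k22 - k12 * k12) * z2 * z2) by field.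
    pose proof (pow2_ge_0 (k11 * z1 + k12 * z2)).
    assert (0 <= (k11 * k22 - k12 * k12) * (z2 * z2)) by (apply Rmult_le_pos; nra).
    assert (0 < k11) by lra.
    set (Q := k11 * z1 * z1 + 2 * k12 * z1 * z2 + k22 * z2 * z2) in *.
    destruct (Rle_dec 0 Q); auto. nra.
Qed.

Lemma key_det e x y p q : 0 <= x -> x <= e^2/2 -> 0 <= y -> y <= e^2/2 -> 0 <= q ->
  p = 1 - q - y/2 ->
  2 * q * y * (x * (2 - x)) <= (2*e^2 - 2*x) * (2*e^2 - 2*y - 2*p*x).
Proof.
  intros. subst p.
  assert ((e^2 - x) * (e^2 - y - (1 - q - y/2) * x) - q * x * y =
          (e^2 - x) * ((e^2 - x - y) + x * y / 2) + q * x * (e^2 - x - y)) by field.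
  assert (0 <= x*y) by (apply Rmult_le_pos; lra).
  assert (0 <= (e^2 - x) * ((e^2 - x - y) + x * y / 2)) by (apply Rmult_le_pos; lra).
  assert (0 <= q * x * (e^2 - x - y)) by (apply Rmult_le_pos; [apply Rmult_le_pos|]; lra).
  assert (0 <= q * y * (x * x)) by (apply Rmult_le_pos; [apply Rmult_le_pos|]; nra).
  assert (q * y * (x * (2 - x)) = 2 * q * x * y - q * y * (x * x)) by field.
  assert ((2*e^2 - 2*x) * (2*e^2 - 2*y - 2*(1 - q - y/2)*x) = 4 * ((e^2 - x) * (e^2 - y - (1 - q - y/2) * x))) by field.
  lra.
Qed.

Lemma dot2_nn v : 0 <= dot2 v v.
Proof. unfold dot2; nra. Qed.
Lemma dot3_nn v : 0 <= dot3 v v.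
Proof. unfold dot3; nra. Qed.
Lemma norm2_nn v : 0 <= norm2 v.
Proof. apply sqrt_pos. Qed.
Lemma norm3_nn v : 0 <= norm3 v.
Proof. apply sqrt_pos. Qed.
Lemma norm2_sq v : norm2 v * norm2 v = dot2 v v.
Proof. apply sqrt_sqrt, dot2_nn. Qed.
Lemma norm3_sq v : norm3 v * norm3 v = dot3 v v.
Proof. apply sqrt_sqrt, dot3_nn. Qed.

Lemma le_of_sq a b : 0 <= b -> a * a <= b * b -> a <= b.
Proof. intros. nra. Qed.
Lemma sq_le a b : 0 <= a -> a <= b -> a * a <= b * b.
Proof. intros. nra. Qed.

Lemma norm2_le v c : 0 <= c -> dot2 v v <= c * c -> norm2 v <= c.
Proof. intros. apply le_of_sq; auto. rewrite norm2_sq. auto. Qed.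
Lemma norm3_le v c : 0 <= c -> dot3 v v <= c * c -> norm3 v <= c.
Proof. intros. apply le_of_sq; auto. rewrite norm3_sq. auto. Qed.

Lemma CS2 a b : Rabs (dot2 a b) <= norm2 a * norm2 b.
Proof.
  pose proof (norm2_sq a). pose proof (norm2_sq b). pose proof (norm2_nn a). pose proof (norm2_nn b).
  assert (dot2 a b * dot2 a b <= dot2 a a * dot2 b b).
  { clear. destruct a as [a1 a2], b as [b1 b2]; unfold dot2; simpl.
    pose proof (pow2_ge_0 (a1*b2-a2*b1)). nra. }
  rewrite sq_abs in H3. apply le_of_sq. apply Rmult_le_pos; auto. nra.
Qed.
Lemma CS3 a b : Rabs (dot3 a b) <= norm3 a * norm3 b.
Proof.
  pose proof (norm3_sq a). pose proof (norm3_sq b). pose proof (norm3_nn a). pose proof (norm3_nn b).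
  assert (dot3 a b * dot3 a b <= dot3 a a * dot3 b b).
  { clear. destruct a as [a1 a2 a3], b as [b1 b2 b3]; unfold dot3; simpl.
    assert (0 <= (a1*b2-a2*b1)^2 + (a1*b3-a3*b1)^2 + (a2*b3-a3*b2)^2) by
      (pose proof (pow2_ge_0 (a1*b2-a2*b1)); pose proof (pow2_ge_0 (a1*b3-a3*b1)); pose proof (pow2_ge_0 (a2*b3-a3*b2)); lra).
    nra. }
  rewrite sq_abs in H3. apply le_of_sq. apply Rmult_le_pos; auto. nra.
Qed.

Lemma tri2 a b : norm2 (add2 a b) <= norm2 a + norm2 b.
Proof.
  apply norm2_le. pose proof (norm2_nn a). pose proof (norm2_nn b). lra.
  pose proof (CS2 a b). pose proof (Rle_abs (dot2 a b)).
  assert (dot2 (add2 a b) (add2 a b) = dot2 a a + 2 * dot2 a b + dot2 b b) by (destruct a, b; unfold dot2, add2; simpl; ring).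
  rewrite H1, <- (norm2_sq a), <- (norm2_sq b). nra.
Qed.
Lemma tri3 a b : norm3 (add3 a b) <= norm3 a + norm3 b.
Proof.
  apply norm3_le. pose proof (norm3_nn a). pose proof (norm3_nn b). lra.
  pose proof (CS3 a b). pose proof (Rle_abs (dot3 a b)).
  assert (dot3 (add3 a b) (add3 a b) = dot3 a a + 2 * dot3 a b + dot3 b b) by (destruct a, b; unfold dot3, add3; simpl; ring).
  rewrite H1, <- (norm3_sq a), <- (norm3_sq b). nra.
Qed.

Lemma tri2s a b c : norm2 (sub2 a c) <= norm2 (sub2 a b) + norm2 (sub2 b c).
Proof.
  replace (sub2 a c) with (add2 (sub2 a b) (sub2 b c)). apply tri2.
  destruct a, b, c; unfold add2, sub2; simpl; f_equal; ring.
Qed.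

Lemma norm2_eq_of_dot a b : dot2 a a = dot2 b b -> norm2 a = norm2 b.
Proof. unfold norm2; intros ->; auto. Qed.

Lemma norm2_sub_sym a b : norm2 (sub2 a b) = norm2 (sub2 b a).
Proof. apply norm2_eq_of_dot. destruct a, b; unfold dot2, sub2; simpl; ring. Qed.

Lemma projid t f u a : dot2 (Mm t f u) (Mm t f a) + dot3 (Xv t f) u * dot3 (Xv t f) a = dot3 u a.
Proof.
  destruct u as [u1 u2 u3], a as [a1 a2 a3]. unfold dot2, dot3, Mm, Xv; simpl.
  pose proof (sin2_cos2 t). pose proof (sin2_cos2 f). unfold Rsqr in *.
  nsatz.
Qed.

Lemma Xunit t f : dot3 (Xv t f) (Xv t f) = 1.
Proof.
  unfold dot3, Xv; simpl.
  pose proof (sin2_cos2 t). pose proof (sin2_cos2 f). unfold Rsqr in *. nsatz.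
Qed.

Lemma Mnorm_le t f v : norm2 (Mm t f v) <= norm3 v.
Proof.
  apply norm2_le. apply norm3_nn. rewrite norm3_sq.
  pose proof (projid t f v v). pose proof (sq_abs (dot3 (Xv t f) v)). pose proof (Rabs_pos (dot3 (Xv t f) v)). nra.
Qed.

Lemma Mm_sub t f a b : Mm t f (sub3 a b) = sub2 (Mm t f a) (Mm t f b).
Proof. destruct a, b; unfold Mm, sub2, sub3; simpl; f_equal; ring. Qed.

Lemma Mm_lin t f c a b : Mm t f (add3 (scal3 c a) b) = add2 (scal2 c (Mm t f a)) (Mm t f b).
Proof. destruct a, b; unfold Mm, add2, add3, scal2, scal3; simpl; f_equal; ring. Qed.

Lemma Rot_norm a v : norm2 (Rot a v) = norm2 v.
Proof.
  apply norm2_eq_of_dot. destruct v; unfold dot2, Rot; simpl.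
  pose proof (sin2_cos2 a). unfold Rsqr in *. nsatz.
Qed.

Lemma Rot_sub a u v : sub2 (Rot a u) (Rot a v) = Rot a (sub2 u v).
Proof. destruct u, v; unfold Rot, sub2; simpl; f_equal; ring. Qed.

Lemma Rot_lip a a' e v : Rabs (a - a') <= e -> norm2 (sub2 (Rot a v) (Rot a' v)) <= e * norm2 v.
Proof.
  intros H. pose proof (Rabs_pos (a - a')).
  apply norm2_le. pose proof (norm2_nn v). nra.
  pose proof (one_minus_cos (a - a')). rewrite cos_minus in H1.
  assert ((a-a')^2 <= e*e).
  { replace ((a-a')^2) with (Rabs (a-a') * Rabs (a-a')) by (rewrite <- sq_abs; ring). apply sq_le; auto. }
  assert (dot2 (sub2 (Rot a v) (Rot a' v)) (sub2 (Rot a v) (Rot a' v)) =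
          2 * (1 - (cos a * cos a' + sin a * sin a')) * dot2 v v).
  { destruct v; unfold dot2, Rot, sub2; simpl.
    pose proof (sin2_cos2 a). pose proof (sin2_cos2 a'). unfold Rsqr in *. nsatz. }
  rewrite H3. rewrite <- norm2_sq. pose proof (norm2_nn v).
  assert (0 <= norm2 v * norm2 v) by nra.
  assert (2 * (1 - (cos a * cos a' + sin a * sin a')) <= e * e) by lra.
  nra.
Qed.

Lemma CS3sq a b : dot3 a b * dot3 a b <= dot3 a a * dot3 b b.
Proof.
  destruct a as [a1 a2 a3], b as [b1 b2 b3]; unfold dot3; simpl.
  assert (0 <= (a1*b2-a2*b1)^2 + (a1*b3-a3*b1)^2 + (a2*b3-a3*b2)^2) by
      (pose proof (pow2_ge_0 (a1*b2-a2*b1)); pose proof (pow2_ge_0 (a1*b3-a3*b1)); pose proof (pow2_ge_0 (a2*b3-a3*b2)); lra).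
  nra.
Qed.

Lemma cosdiff_le1 c s c' s' : s*s + c*c = 1 -> s'*s' + c'*c' = 1 -> c*c' + s*s' <= 1 /\ c*c' - s*s' <= 1.
Proof.
  intros H1 H2.
  assert ((c*c'+s*s')*(c*c'+s*s') + (c*s' - s*c')*(c*s' - s*c') = 1) by nsatz.
  assert ((c*c'-s*s')*(c*c'-s*s') + (c*s' + s*c')*(c*s' + s*c') = 1) by nsatz.
  pose proof (Rle_0_sqr (c*s' - s*c')). pose proof (Rle_0_sqr (c*s' + s*c')). unfold Rsqr in *.
  split; nra.
Qed.

Lemma gram11 ct st ct' st' : st*st + ct*ct = 1 -> st'*st' + ct'*ct' = 1 ->
  dot3 (mkV3 (-st+st') (ct-ct') 0) (mkV3 (-st+st') (ct-ct') 0) = 2 * (1 - (ct*ct' + st*st')).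
Proof. intros. unfold dot3; simpl. nsatz. Qed.
Lemma gram22 ct st ct' st' cf sf cf' sf' : st*st + ct*ct = 1 -> st'*st' + ct'*ct' = 1 ->
  sf*sf + cf*cf = 1 -> sf'*sf' + cf'*cf' = 1 ->
  let a2 := mkV3 (-ct*cf + ct'*cf') (-st*cf+st'*cf') (sf-sf') in
  dot3 a2 a2 = 2 * (1 - (cf*cf' + sf*sf')) + 2 * (cf*cf') * (1 - (ct*ct' + st*st')).
Proof. intros. unfold a2, dot3; simpl. nsatz. Qed.
Lemma gram12 ct st ct' st' cf sf cf' sf' : st*st + ct*ct = 1 -> st'*st' + ct'*ct' = 1 ->
  sf*sf + cf*cf = 1 -> sf'*sf' + cf'*cf' = 1 ->
  let a1 := mkV3 (-st+st') (ct-ct') 0 in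
  let a2 := mkV3 (-ct*cf + ct'*cf') (-st*cf+st'*cf') (sf-sf') in
  dot3 a1 a2 * dot3 a1 a2 = (1 - cf*cf' + sf*sf') * (1 - (cf*cf' + sf*sf'))
     * ((1 - (ct*ct' + st*st')) * (2 - (1 - (ct*ct' + st*st')))).
Proof. intros. unfold a1, a2, dot3; simpl. nsatz. Qed.

Lemma M_lip_alg ct st ct' st' cf sf cf' sf' e v1 v2 v3 :
  st*st + ct*ct = 1 -> st'*st' + ct'*ct' = 1 -> sf*sf + cf*cf = 1 -> sf'*sf' + cf'*cf' = 1 ->
  1 - (ct*ct' + st*st') <= e^2/2 -> 1 - (cf*cf' + sf*sf') <= e^2/2 ->
  let a1 := mkV3 (-st+st') (ct-ct') 0 in
  let a2 := mkV3 (-ct*cf + ct'*cf') (-st*cf+st'*cf') (sf-sf') in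
  let v := mkV3 v1 v2 v3 in
  dot3 a1 v * dot3 a1 v + dot3 a2 v * dot3 a2 v <= 2 * e^2 * dot3 v v.
Proof.
  intros Ht Ht' Hf Hf' Hx Hy a1 a2 v.
  destruct (cosdiff_le1 ct st ct' st' Ht Ht') as [Cx _].
  destruct (cosdiff_le1 cf sf cf' sf' Hf Hf') as [Cy Cq].
  pose proof (gram11 ct st ct' st' Ht Ht') as B11.
  pose proof (gram22 ct st ct' st' cf sf cf' sf' Ht Ht' Hf Hf') as B22. simpl in B22.
  pose proof (gram12 ct st ct' st' cf sf cf' sf' Ht Ht' Hf Hf') as B12. simpl in B12.
  fold a1 in B11. fold a1 a2 in B12. fold a2 in B22.
  remember (dot3 a1 v) as z1 eqn:Ez1. remember (dot3 a2 v) as z2 eqn:Ez2.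
  remember (1 - (ct*ct' + st*st')) as x eqn:Ex.
  remember (1 - (cf*cf' + sf*sf')) as y eqn:Ey.
  remember (cf*cf') as p eqn:Ep.
  remember ((1 - p + sf*sf')/2) as q eqn:Eq.
  replace ((1 - p + sf*sf') * y * (x*(2-x))) with (2*q*y*(x*(2-x))) in B12 by (rewrite Eq; field).
  assert (Hx0 : 0 <= x) by lra.
  assert (Hy0 : 0 <= y) by lra.
  assert (Hq0 : 0 <= q) by (clear - Cq Eq Ep; subst; lra).
  assert (pq : p = 1 - q - y/2) by (rewrite Eq, Ey; field).
  assert (p1 : p <= 1) by lra.
  assert (p2 : -1 <= p) by (clear - Hf Hf' Ep; subst p; nra).
  set (g := add3 (scal3 z1 a1) (scal3 z2 a2)).
  assert (G : dot3 g g = (z1*z1) * dot3 a1 a1 + 2 * (z1 * z2) * dot3 a1 a2 + (z2*z2) * dot3 a2 a2).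
  { unfold g. destruct a1, a2; unfold dot3, add3, scal3; simpl. ring. }
  assert (Dg : dot3 g v = z1*z1 + z2*z2).
  { unfold g. rewrite Ez1, Ez2. destruct a1, a2, v; unfold dot3, add3, scal3; simpl. ring. }
  assert (K : dot3 g g <= 2*e^2 * (z1*z1 + z2*z2)).
  { pose proof (psd2 (2*e^2 - 2*x) (- dot3 a1 a2) (2*e^2 - 2*y - 2*p*x) z1 z2).
    pose proof (key_det e x y p q Hx0 Hx Hy0 Hy Hq0 pq).
    assert (0 <= 2*e^2 - 2*x) by lra.
    assert (0 <= 2*e^2 - 2*y - 2*p*x).
    { assert (0 <= (1-p)*x) by (apply Rmult_le_pos; lra).
      assert (0 <= (1+p)*x) by (apply Rmult_le_pos; lra). lra. }
    assert (- dot3 a1 a2 * - dot3 a1 a2 <= (2*e^2 - 2*x) * (2*e^2 - 2*y - 2*p*x)) by (rewrite Rmult_opp_opp; lra).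
    specialize (H H1 H2 H3).
    rewrite G, B11, B22. nra. }
  pose proof (CS3sq g v). rewrite Dg in H.
  remember (z1*z1 + z2*z2) as Z eqn:EZ.
  assert (0 <= Z) by (rewrite EZ; nra).
  pose proof (dot3_nn v).
  assert (Z * Z <= 2*e^2 * Z * dot3 v v).
  { apply Rle_trans with (dot3 g g * dot3 v v); auto. apply Rmult_le_compat_r; auto. }
  destruct (Req_dec Z 0) as [Z0|Z0].
  - rewrite Z0. assert (0 <= e^2) by apply pow2_ge_0. nra.
  - assert (0 < Z) by lra.
    apply Rmult_le_reg_l with Z; auto. nra.
Qed.

Lemma cos_close d e : Rabs d <= e -> 1 - cos d <= e^2/2.
Proof.
  intros H. pose proof (one_minus_cos d). pose proof (Rabs_pos d).
  assert (d^2 <= e^2).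
  { replace (d^2) with (Rabs d * Rabs d) by (rewrite <- sq_abs; ring).
    replace (e^2) with (e*e) by ring. apply sq_le; auto. }
  lra.
Qed.

Lemma pyth x : sin x * sin x + cos x * cos x = 1.
Proof. pose proof (sin2_cos2 x). unfold Rsqr in H. auto. Qed.

Lemma sqrt2_sq : sqrt 2 * sqrt 2 = 2.
Proof. apply sqrt_sqrt; lra. Qed.

Lemma M_lip t f t' f' e v : Rabs (t-t') <= e -> Rabs (f-f') <= e ->
  norm2 (sub2 (Mm t f v) (Mm t' f' v)) <= sqrt 2 * e * norm3 v.
Proof.
  intros Ht Hf.
  pose proof (cos_close _ _ Ht) as Hx. rewrite cos_minus in Hx.
  pose proof (cos_close _ _ Hf) as Hy. rewrite cos_minus in Hy.
  pose proof (Rabs_pos (t - t')).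
  apply norm2_le.
  { pose proof (sqrt_pos 2). pose proof (norm3_nn v). apply Rmult_le_pos; [apply Rmult_le_pos|]; lra. }
  destruct v as [v1 v2 v3].
  pose proof (M_lip_alg (cos t) (sin t) (cos t') (sin t') (cos f) (sin f) (cos f') (sin f') e v1 v2 v3
     (pyth t) (pyth t') (pyth f) (pyth f') Hx Hy) as K. simpl in K.
  replace (sqrt 2 * e * norm3 {| vx := v1; vy := v2; vz := v3 |} *
           (sqrt 2 * e * norm3 {| vx := v1; vy := v2; vz := v3 |}))
    with (2 * e^2 * dot3 {| vx := v1; vy := v2; vz := v3 |} {| vx := v1; vy := v2; vz := v3 |}).
  2:{ rewrite <- norm3_sq. replace (2 * e^2) with (sqrt 2 * sqrt 2 * e * e) by (rewrite sqrt2_sq; ring). ring. }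
  eapply Rle_trans; [|apply K].
  right. unfold dot2, dot3, Mm, sub2; simpl. ring.
Qed.

Lemma X_lip t f t' f' e : Rabs (t-t') <= e -> Rabs (f-f') <= e ->
  norm3 (sub3 (Xv t f) (Xv t' f')) <= sqrt 2 * e.
Proof.
  intros Ht Hf.
  pose proof (cos_close _ _ Ht) as Hx. rewrite cos_minus in Hx.
  pose proof (cos_close _ _ Hf) as Hy. rewrite cos_minus in Hy.
  pose proof (Rabs_pos (t - t')).
  apply norm3_le.
  { pose proof (sqrt_pos 2). apply Rmult_le_pos; lra. }
  replace (sqrt 2 * e * (sqrt 2 * e)) with (2 * e^2) by (replace (2 * e^2) with (sqrt 2 * sqrt 2 * e * e) by (rewrite sqrt2_sq; ring); ring).
  assert (E : dot3 (sub3 (Xv t f) (Xv t' f')) (sub3 (Xv t f) (Xv t' f')) =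
    2 * (1 - (cos f * cos f' + sin f * sin f')) + 2 * (sin f * sin f') * (1 - (cos t * cos t' + sin t * sin t'))).
  { unfold dot3, sub3, Xv; simpl. pose proof (pyth t). pose proof (pyth t'). pose proof (pyth f). pose proof (pyth f'). nsatz. }
  rewrite E.
  destruct (cosdiff_le1 _ _ _ _ (pyth t) (pyth t')) as [C1 _].
  destruct (cosdiff_le1 _ _ _ _ (pyth f) (pyth f')) as [C2 C3].
  assert (-1 <= sin f * sin f' <= 1).
  { pose proof (SIN_bound f). pose proof (SIN_bound f'). split; nra. }
  assert (0 <= (1 - sin f * sin f') * (1 - (cos t * cos t' + sin t * sin t'))) by (apply Rmult_le_pos; lra).
  lra.
Qed.

Lemma norm2_zero_le v : dot2 v v <= 0 -> norm2 v <= 0.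
Proof. intros. apply le_of_sq. lra. rewrite norm2_sq. lra. Qed.

Lemma norm2_scal_le c v : 0 <= c -> norm2 (scal2 c v) <= c * norm2 v.
Proof.
  intros. apply norm2_le. pose proof (norm2_nn v). nra.
  replace (c * norm2 v * (c * norm2 v)) with (c * c * (norm2 v * norm2 v)) by ring.
  rewrite norm2_sq. destruct v; unfold dot2, scal2; simpl. nra.
Qed.

Lemma cone_list z k (S : V2 -> Prop) l : 0 <= k ->
  (forall x, S x -> k * norm2 (sub2 z x) <= dot2 z (sub2 z x)) ->
  Forall (fun cq => 0 <= fst cq /\ S (snd cq)) l ->
  k * norm2 (sub2 (scal2 (wsum l) z) (lincomb2 l)) <= dot2 z (sub2 (scal2 (wsum l) z) (lincomb2 l)).
Proof.
  intros Hk HS HF. induction HF as [|[c x] l [Hc Hx] HF IH]; simpl in *.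
  - assert (E : dot2 (sub2 (scal2 0 z) zero2) (sub2 (scal2 0 z) zero2) = 0)
      by (destruct z; unfold dot2, sub2, scal2, zero2; simpl; ring).
    assert (E2 : dot2 z (sub2 (scal2 0 z) zero2) = 0)
      by (destruct z; unfold dot2, sub2, scal2, zero2; simpl; ring).
    pose proof (norm2_zero_le _ (Req_le _ _ E)). rewrite E2. nra.
  - set (A := sub2 (scal2 (wsum l) z) (lincomb2 l)) in *.
    assert (EA : sub2 (scal2 (c + wsum l) z) (add2 (scal2 c x) (lincomb2 l)) = add2 (scal2 c (sub2 z x)) A).
    { unfold A. destruct z, x, (lincomb2 l); unfold sub2, scal2, add2; simpl; f_equal; ring. }
    unfold wsum in *. simpl. fold (wsum l) in *. unfold lincomb2 in *; simpl; fold (lincomb2 l) in *.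
    rewrite EA.
    assert (ED : dot2 z (add2 (scal2 c (sub2 z x)) A) = c * dot2 z (sub2 z x) + dot2 z A)
      by (destruct z, x, A; unfold dot2, sub2, scal2, add2; simpl; ring).
    rewrite ED.
    pose proof (tri2 (scal2 c (sub2 z x)) A).
    pose proof (norm2_scal_le c (sub2 z x) Hc).
    pose proof (HS x Hx).
    assert (0 <= c * (dot2 z (sub2 z x) - k * norm2 (sub2 z x))) by (apply Rmult_le_pos; lra).
    nra.
Qed.

Lemma conv_cone z k (S : V2 -> Prop) y : 0 <= k ->
  (forall x, S x -> k * norm2 (sub2 z x) <= dot2 z (sub2 z x)) ->
  conv2 S y -> k * norm2 (sub2 z y) <= dot2 z (sub2 z y).
Proof.
  intros Hk HS [l [HF [Hw Hy]]].
  pose proof (cone_list z k S l Hk HS HF). rewrite Hw in H.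
  replace (sub2 z y) with (sub2 (scal2 1 z) (lincomb2 l)); auto.
  rewrite Hy. destruct z; unfold sub2, scal2; simpl; f_equal; ring.
Qed.

Lemma step1 z y k (S : V2 -> Prop) : 0 <= k -> 0 < norm2 z ->
  (forall x, S x -> k * norm2 z * norm2 (sub2 z x) <= dot2 z (sub2 z x)) ->
  interior2 (conv2 S) y ->
  norm2 (sub2 z y) < 2 * k * norm2 z ->
  norm2 y < norm2 z.
Proof.
  intros Hk Hz HS [rho [Hr Hint]] Hd.
  assert (Hkz : 0 <= k * norm2 z) by (apply Rmult_le_pos; lra).
  assert (HC : forall y', conv2 S y' -> k * norm2 z * norm2 (sub2 z y') <= dot2 z (sub2 z y')).
  { intros. apply conv_cone with S; auto. }
  set (s := rho / (2 * (norm2 z + 1))).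
  assert (Hs : 0 < s) by (unfold s; apply Rdiv_lt_0_compat; lra).
  assert (Hs2 : s * norm2 z < rho).
  { unfold s. apply Rmult_lt_reg_r with (2 * (norm2 z + 1)). lra.
    field_simplify; try lra. nra. }
  set (y' := add2 y (scal2 s z)).
  assert (Hy' : conv2 S y').
  { apply Hint. replace (sub2 y' y) with (scal2 s z).
    pose proof (norm2_scal_le s z). lra.
    unfold y'. destruct y, z; unfold sub2, add2, scal2; simpl; f_equal; ring. }
  pose proof (HC y' Hy') as C1.
  assert (Hy0 : conv2 S y).
  { apply Hint. replace (sub2 y y) with zero2 by (destruct y; unfold sub2, zero2; simpl; f_equal; ring).
    assert (norm2 zero2 <= 0) by (apply norm2_zero_le; unfold dot2, zero2; simpl; lra). lra. }
  pose proof (HC y Hy0) as C2.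
  assert (E1 : dot2 z (sub2 z y') = dot2 z (sub2 z y) - s * dot2 z z)
    by (unfold y'; destruct y, z; unfold dot2, sub2, add2, scal2; simpl; ring).
  pose proof (norm2_nn (sub2 z y')).
  assert (Pp : 0 < dot2 z (sub2 z y)).
  { rewrite <- norm2_sq in E1. assert (0 < s * (norm2 z * norm2 z)) by (apply Rmult_lt_0_compat; nra). nra. }
  assert (E2 : dot2 y y = dot2 z z - 2 * dot2 z (sub2 z y) + dot2 (sub2 z y) (sub2 z y))
    by (destruct y, z; unfold dot2, sub2; simpl; ring).
  rewrite <- !norm2_sq in E2.
  assert (Hd2 : norm2 (sub2 z y) < 2 * (k * norm2 z)) by lra.
  set (d := norm2 (sub2 z y)) in *. set (P := dot2 z (sub2 z y)) in *. set (m := k * norm2 z) in *.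
  assert (d0 : 0 <= d) by apply norm2_nn.
  assert (Hlt : norm2 y * norm2 y < norm2 z * norm2 z).
  { destruct (Req_dec d 0) as [D0|D0].
    - rewrite E2, D0. lra.
    - assert (d * (d - 2 * m) < 0). { apply Rmult_pos_neg; lra. }
      rewrite E2. nra. }
  pose proof (norm2_nn y). nra.
Qed.

Definition LtX (c1 c2 c3 X : V3) : V3 := mkV3 (dot3 c1 X) (dot3 c2 X) (dot3 c3 X).

Lemma LtX_dot c1 c2 c3 X q : dot3 (LtX c1 c2 c3 X) q = dot3 X (applyL c1 c2 c3 q).
Proof. destruct c1, c2, c3, X, q; unfold LtX, dot3, applyL, add3, scal3; simpl. ring. Qed.

Lemma applyL_dot c1 c2 c3 q : orthonormal3 c1 c2 c3 ->
  dot3 (applyL c1 c2 c3 q) (applyL c1 c2 c3 q) = dot3 q q.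
Proof.
  intros (H1 & H2 & H3 & H4 & H5 & H6).
  assert (E : dot3 (applyL c1 c2 c3 q) (applyL c1 c2 c3 q) =
    vx q * vx q * dot3 c1 c1 + vy q * vy q * dot3 c2 c2 + vz q * vz q * dot3 c3 c3
    + 2 * vx q * vy q * dot3 c1 c2 + 2 * vx q * vz q * dot3 c1 c3 + 2 * vy q * vz q * dot3 c2 c3).
  { destruct c1, c2, c3, q; unfold dot3, applyL, add3, scal3; simpl. ring. }
  rewrite E, H1, H2, H3, H4, H5, H6. destruct q; unfold dot3; simpl; ring.
Qed.

Lemma bessel c1 c2 c3 X : orthonormal3 c1 c2 c3 ->
  dot3 (LtX c1 c2 c3 X) (LtX c1 c2 c3 X) <= dot3 X X.
Proof.
  intros (H1 & H2 & H3 & H4 & H5 & H6).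
  set (a1 := dot3 c1 X). set (a2 := dot3 c2 X). set (a3 := dot3 c3 X).
  set (W := sub3 X (add3 (scal3 a1 c1) (add3 (scal3 a2 c2) (scal3 a3 c3)))).
  assert (E : dot3 W W = dot3 X X - 2 * (a1 * dot3 c1 X + a2 * dot3 c2 X + a3 * dot3 c3 X)
     + a1*a1*dot3 c1 c1 + a2*a2*dot3 c2 c2 + a3*a3*dot3 c3 c3
     + 2*a1*a2*dot3 c1 c2 + 2*a1*a3*dot3 c1 c3 + 2*a2*a3*dot3 c2 c3).
  { unfold W, a1, a2, a3. destruct c1, c2, c3, X; unfold dot3, sub3, add3, scal3; simpl. ring. }
  rewrite H1, H2, H3, H4, H5, H6 in E. fold a1 a2 a3 in E.
  pose proof (dot3_nn W).
  assert (dot3 (LtX c1 c2 c3 X) (LtX c1 c2 c3 X) = a1*a1 + a2*a2 + a3*a3) by (change (LtX c1 c2 c3 X) with (mkV3 a1 a2 a3); unfold dot3; simpl; ring).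
  lra.
Qed.

Definition cross (a b : V2) := dot2 (Rot (PI/2) a) b.

Lemma cross_eq a b : cross a b = wx a * wy b - wy a * wx b.
Proof. unfold cross, Rot, dot2; simpl. rewrite cos_PI2, sin_PI2. ring. Qed.

Lemma cross_bound a b : Rabs (cross a b) <= norm2 a * norm2 b.
Proof. unfold cross. rewrite <- (Rot_norm (PI/2) a). apply CS2. Qed.

Lemma core (Y w : V3) (sq : R) (Q : nat -> V3) t f :
  Y = Xv t f -> sq * sq = 1 -> dot3 w w <= 1 ->
  (forall i, (i < 3)%nat -> dot3 w (Q i) > dot3 (scal3 sq Y) (Q i) /\ dot3 (scal3 sq Y) (Q i) > 0) ->
  cross (Mm t f (Q 0%nat)) (Mm t f (Q 1%nat)) > 0 ->
  cross (Mm t f (Q 1%nat)) (Mm t f (Q 2%nat)) > 0 ->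
  cross (Mm t f (Q 2%nat)) (Mm t f (Q 0%nat)) > 0 -> False.
Proof.
  intros HY Hsq Hw HQ C1 C2 C3.
  set (v := scal3 sq Y) in *.
  assert (Hv : dot3 v v = 1).
  { unfold v. assert (dot3 (scal3 sq Y) (scal3 sq Y) = sq * sq * dot3 Y Y) by (destruct Y; unfold dot3, scal3; simpl; ring).
    rewrite H, Hsq, HY, Xunit. ring. }
  set (c := dot3 w v).
  assert (Hc : c <= 1).
  { pose proof (CS3sq w v). fold c in H. rewrite Hv in H. nra. }
  set (u := sub3 w (scal3 c v)).
  assert (Hu : forall i, (i < 3)%nat -> dot3 u (Q i) > 0).
  { intros i Hi. destruct (HQ i Hi) as [A1 A2].
    assert (dot3 u (Q i) = dot3 w (Q i) - c * dot3 v (Q i)) by (unfold u; destruct w, v, (Q i); unfold dot3, sub3, scal3; simpl; ring).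
    assert (0 <= (1 - c) * dot3 v (Q i)) by (apply Rmult_le_pos; lra).
    nra. }
  assert (HYu : dot3 Y u = 0).
  { assert (dot3 v u = c - c * dot3 v v).
    { unfold u, c. destruct w, v; unfold dot3, sub3, scal3; simpl; ring. }
    rewrite Hv in H.
    assert (dot3 v u = sq * dot3 Y u) by (unfold v; destruct Y, u; unfold dot3, scal3; simpl; ring).
    assert (sq * dot3 Y u = 0) by lra.
    assert (dot3 Y u = sq * (sq * dot3 Y u)) by (rewrite <- Rmult_assoc, Hsq; ring).
    rewrite H2, H1. ring. }
  assert (Hp : forall i, (i < 3)%nat -> dot2 (Mm t f u) (Mm t f (Q i)) > 0).
  { intros i Hi. pose proof (projid t f u (Q i)). rewrite <- HY, HYu in H. pose proof (Hu i Hi). lra. }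
  pose proof (Hp 0%nat ltac:(lia)). pose proof (Hp 1%nat ltac:(lia)). pose proof (Hp 2%nat ltac:(lia)).
  rewrite cross_eq in C1, C2, C3.
  set (z := Mm t f u) in *. set (q0 := Mm t f (Q 0%nat)) in *. set (q1 := Mm t f (Q 1%nat)) in *.
  set (q2 := Mm t f (Q 2%nat)) in *.
  assert (Id : (wx q0 * wy q1 - wy q0 * wx q1) * dot2 z q2 + (wx q1 * wy q2 - wy q1 * wx q2) * dot2 z q0
     + (wx q2 * wy q0 - wy q2 * wx q0) * dot2 z q1 = 0).
  { clearbody z q0 q1 q2. destruct z, q0, q1, q2; unfold dot2; simpl; ring. }
  assert (0 < (wx q0 * wy q1 - wy q0 * wx q1) * dot2 z q2) by (apply Rmult_lt_0_compat; lra).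
  assert (0 < (wx q1 * wy q2 - wy q1 * wx q2) * dot2 z q0) by (apply Rmult_lt_0_compat; lra).
  assert (0 < (wx q2 * wy q0 - wy q2 * wx q0) * dot2 z q1) by (apply Rmult_lt_0_compat; lra).
  lra.
Qed.

Lemma abs_bounds x c : Rabs x <= c -> -c <= x <= c.
Proof. intros. pose proof (Rle_abs x). pose proof (Rle_abs (-x)). rewrite Rabs_Ropp in H1. lra. Qed.

Lemma norm2_tri_sub a b : norm2 a <= norm2 b + norm2 (sub2 a b).
Proof.
  replace a with (add2 b (sub2 a b)) at 1 by (destruct a, b; unfold add2, sub2; simpl; f_equal; ring).
  apply tri2.
Qed.

Lemma norm3_sub_le a b : norm3 (sub3 a b) <= norm3 a + norm3 b.
Proof.
  replace (sub3 a b) with (add3 a (scal3 (-1) b)) by (destruct a, b; unfold add3, sub3, scal3; simpl; f_equal; ring).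
  eapply Rle_trans. apply tri3.
  replace (norm3 (scal3 (-1) b)) with (norm3 b). lra.
  unfold norm3. f_equal. destruct b; unfold dot3, scal3; simpl; ring.
Qed.

Lemma dot_transfer a ab b bb : dot2 ab bb - norm2 (sub2 a ab) * norm2 bb - norm2 a * norm2 (sub2 b bb) <= dot2 a b.
Proof.
  assert (dot2 a b = dot2 ab bb + dot2 (sub2 a ab) bb + dot2 a (sub2 b bb))
    by (destruct a, ab, b, bb; unfold dot2, sub2; simpl; ring).
  pose proof (CS2 (sub2 a ab) bb). pose proof (CS2 a (sub2 b bb)).
  apply abs_bounds in H0. apply abs_bounds in H1. lra.
Qed.

Lemma cross_transfer a ab b bb : cross ab bb - norm2 (sub2 a ab) * norm2 bb - norm2 a * norm2 (sub2 b bb) <= cross a b.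
Proof.
  assert (cross a b = cross ab bb + cross (sub2 a ab) bb + cross a (sub2 b bb))
    by (rewrite !cross_eq; destruct a, ab, b, bb; unfold sub2; simpl; ring).
  pose proof (cross_bound (sub2 a ab) bb). pose proof (cross_bound a (sub2 b bb)).
  apply abs_bounds in H0. apply abs_bounds in H1. lra.
Qed.

Lemma sqrt_facts : sqrt 2 <= 3/2 /\ 11/5 <= sqrt 5 /\ 0 < sqrt 2.
Proof.
  split; [|split].
  - apply le_of_sq. lra. rewrite sqrt_sqrt; lra.
  - apply le_of_sq. apply sqrt_pos. rewrite sqrt_sqrt; lra.
  - apply sqrt_lt_R0; lra.
Qed.

Lemma pow_m1 s : (s = 0 \/ s = 1)%nat -> (-1)^s = 1 \/ (-1)^s = -1.
Proof. intros [-> | ->]; simpl; [left|right]; ring. Qed.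

Lemma step_i (Pl : list V3) (P Q : nat -> V3) (eps th1 ph1 th2 ph2 al r delta t1 f1 t2 f2 a : R) i :
  (forall p, In p Pl -> norm3 p <= 1) ->
  In (P i) Pl -> In (Q i) Pl ->
  0 < eps -> 0 < r ->
  norm2 (Mm th2 ph2 (Q i)) > r + sqrt 2 * eps ->
  delta >= norm2 (sub2 (Rot al (Mm th1 ph1 (P i))) (Mm th2 ph2 (Q i))) / 2 ->
  (forall Qj, In Qj Pl -> Qj <> Q i ->
        (dot2 (Mm th2 ph2 (Q i)) (Mm th2 ph2 (sub3 (Q i) Qj))
           - 2 * eps * norm3 (sub3 (Q i) Qj) * (sqrt 2 + eps))
        / ((norm2 (Mm th2 ph2 (Q i)) + sqrt 2 * eps)
           * (norm2 (Mm th2 ph2 (sub3 (Q i) Qj)) + 2 * sqrt 2 * eps))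
        > (sqrt 5 * eps + delta) / r) ->
  Rabs (t1 - th1) <= eps -> Rabs (f1 - ph1) <= eps ->
  Rabs (t2 - th2) <= eps -> Rabs (f2 - ph2) <= eps ->
  Rabs (a - al) <= eps ->
  interior2 (conv2 (fun y => exists q, In q Pl /\ y = Mm t2 f2 q)) (Rot a (Mm t1 f1 (P i))) ->
  norm2 (Mm t1 f1 (P i)) < norm2 (Mm t2 f2 (Q i)).
Proof.
  intros Hn HPi HQi Heps Hr Hzb Hd HB Ht1 Hf1 Ht2 Hf2 Ha Hint.
  destruct sqrt_facts as (S2 & S5 & S2p).
  pose proof (Hn _ HPi) as nP. pose proof (Hn _ HQi) as nQ.
  pose proof (norm3_nn (P i)) as nP0. pose proof (norm3_nn (Q i)) as nQ0.
  set (z := Mm t2 f2 (Q i)) in *. set (zb := Mm th2 ph2 (Q i)) in *.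
  set (m := Mm t1 f1 (P i)) in *. set (mb := Mm th1 ph1 (P i)) in *.
  set (y := Rot a m) in *. set (yb := Rot al mb) in *.
  set (k := (sqrt 5 * eps + delta) / r).
  assert (Hd0 : 0 <= delta) by (pose proof (norm2_nn (sub2 yb zb)); lra).
  assert (Hk : 0 < k) by (unfold k; apply Rdiv_lt_0_compat; nra).
  assert (Hzzb : norm2 (sub2 z zb) <= sqrt 2 * eps).
  { eapply Rle_trans. apply M_lip; eauto. assert (0 <= sqrt 2 * eps) by nra. nra. }
  assert (Hz : r < norm2 z).
  { pose proof (norm2_tri_sub zb z). rewrite norm2_sub_sym in H. lra. }
  assert (Hzle : norm2 z <= 1) by (eapply Rle_trans; [apply Mnorm_le|]; auto).
  assert (Hmb : norm2 mb <= 1) by (eapply Rle_trans; [apply Mnorm_le|]; auto).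
  rewrite <- (Rot_norm a m). fold y.
  apply step1 with k (fun y => exists q, In q Pl /\ y = Mm t2 f2 q); auto; try lra.
  - intros x [q [Hq ->]].
    destruct (classic (q = Q i)) as [Eq|Nq].
    + subst q. fold z.
      assert (E0 : dot2 (sub2 z z) (sub2 z z) = 0) by (destruct z; unfold dot2, sub2; simpl; ring).
      assert (E1 : dot2 z (sub2 z z) = 0) by (destruct z; unfold dot2, sub2; simpl; ring).
      pose proof (norm2_zero_le _ (Req_le _ _ E0)). pose proof (norm2_nn (sub2 z z)).
      rewrite E1. assert (norm2 (sub2 z z) = 0) by lra. rewrite H1. lra.
    + pose proof (HB q Hq Nq) as HBq. fold zb in HBq.
      pose proof (Hn q Hq) as nq.
      set (D := sub3 (Q i) q) in *.
      set (bb := Mm th2 ph2 D) in *.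
      assert (Eb : sub2 z (Mm t2 f2 q) = Mm t2 f2 D) by (unfold z, D; rewrite Mm_sub; auto).
      rewrite Eb. set (b := Mm t2 f2 D).
      assert (nD : norm3 D <= 2) by (pose proof (norm3_sub_le (Q i) q); unfold D; lra).
      pose proof (norm3_nn D) as nD0.
      assert (Hbb : norm2 bb <= norm3 D) by apply Mnorm_le.
      assert (Hbbb : norm2 (sub2 b bb) <= sqrt 2 * eps * norm3 D) by (apply M_lip; auto).
      assert (Hb : norm2 b <= norm2 bb + 2 * sqrt 2 * eps).
      { pose proof (norm2_tri_sub b bb). assert (sqrt 2 * eps * norm3 D <= 2 * sqrt 2 * eps).
        { assert (0 <= sqrt 2 * eps) by nra. nra. } lra. }
      assert (Hz2 : norm2 z <= norm2 zb + sqrt 2 * eps) by (pose proof (norm2_tri_sub z zb); lra).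
      pose proof (norm2_nn zb). pose proof (norm2_nn bb). pose proof (norm2_nn b). pose proof (norm2_nn z).
      set (Db := (norm2 zb + sqrt 2 * eps) * (norm2 bb + 2 * sqrt 2 * eps)) in *.
      assert (HDb : 0 < Db) by (unfold Db; apply Rmult_lt_0_compat; nra).
      set (Nb := dot2 zb bb - 2 * eps * norm3 D * (sqrt 2 + eps)) in *.
      assert (HN : k * Db < Nb).
      { replace Nb with ((Nb / Db) * Db) by (field; lra). apply Rmult_lt_compat_r; auto. }
      pose proof (dot_transfer z zb b bb) as T.
      assert (T1 : norm2 (sub2 z zb) * norm2 bb <= sqrt 2 * eps * norm3 D)
        by (apply Rmult_le_compat; auto using norm2_nn; nra).
      assert (T2 : norm2 z * norm2 (sub2 b bb) <= sqrt 2 * eps * norm3 D).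
      { replace (sqrt 2 * eps * norm3 D) with (1 * (sqrt 2 * eps * norm3 D)) by ring.
        apply Rmult_le_compat; auto using norm2_nn. }
      assert (T3 : 0 <= eps * eps * norm3 D) by (apply Rmult_le_pos; nra).
      assert (T4 : norm2 z * norm2 b <= Db) by (unfold Db; apply Rmult_le_compat; auto).
      assert (k * (norm2 z * norm2 b) <= k * Db) by (apply Rmult_le_compat_l; lra).
      unfold Nb in HN. nra.
  -
    assert (H1 : norm2 (sub2 zb yb) <= 2 * delta) by (rewrite norm2_sub_sym; lra).
    assert (H2 : norm2 (sub2 yb (Rot a mb)) <= eps * norm2 mb) by (apply Rot_lip; rewrite Rabs_minus_sym; auto).
    assert (H3 : norm2 (sub2 (Rot a mb) y) <= sqrt 2 * eps).
    { unfold y. rewrite Rot_sub, Rot_norm, norm2_sub_sym. eapply Rle_trans. apply M_lip; eauto.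
      assert (0 <= sqrt 2 * eps) by nra. nra. }
    pose proof (tri2s z zb y). pose proof (tri2s zb yb y). pose proof (tri2s yb (Rot a mb) y).
    assert (2 * k * norm2 z > 2 * k * r) by nra.
    assert (k * r = sqrt 5 * eps + delta) by (unfold k; field; lra).
    pose proof (norm2_nn mb).
    nra.
Qed.

Theorem theorem5p16
  (Pl : list V3) (P Q : nat -> V3) (eps th1 ph1 th2 ph2 al : R) :
  polyhedron Pl -> radius1 Pl ->
  (forall i, (i < 3)%nat -> In (P i) Pl /\ In (Q i) Pl) ->
  congruent P Q ->
  0 < eps ->
  (* (A) *)
  (exists sP sQ : nat, (sP = 0 \/ sP = 1)%nat /\ (sQ = 0 \/ sQ = 1)%nat /\
     forall i, (i < 3)%nat ->
       (-1) ^ sP * dot3 (Xv th1 ph1) (P i) > sqrt 2 * eps /\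
       (-1) ^ sQ * dot3 (Xv th2 ph2) (Q i) > sqrt 2 * eps) ->
  (* (S) *)
  eps_spanning th1 ph1 eps P ->
  eps_spanning th2 ph2 eps Q ->
  (* (B) *)
  (exists r delta, 0 < r /\
     (forall i, (i < 3)%nat -> norm2 (Mm th2 ph2 (Q i)) > r + sqrt 2 * eps) /\
     (forall i, (i < 3)%nat ->
        delta >= norm2 (sub2 (Rot al (Mm th1 ph1 (P i))) (Mm th2 ph2 (Q i))) / 2) /\
     (forall i, (i < 3)%nat -> forall Qj, In Qj Pl -> Qj <> Q i ->
        (dot2 (Mm th2 ph2 (Q i)) (Mm th2 ph2 (sub3 (Q i) Qj))
           - 2 * eps * norm3 (sub3 (Q i) Qj) * (sqrt 2 + eps))
        / ((norm2 (Mm th2 ph2 (Q i)) + sqrt 2 * eps)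
           * (norm2 (Mm th2 ph2 (sub3 (Q i) Qj)) + 2 * sqrt 2 * eps))
        > (sqrt 5 * eps + delta) / r)) ->
  ~ (exists t1 f1 t2 f2 a,
       Rabs (t1 - th1) <= eps /\ Rabs (f1 - ph1) <= eps /\
       Rabs (t2 - th2) <= eps /\ Rabs (f2 - ph2) <= eps /\
       Rabs (a - al) <= eps /\
       forall p, In p Pl ->
         interior2 (conv2 (fun y => exists q, In q Pl /\ y = Mm t2 f2 q))
                   (Rot a (Mm t1 f1 p))).
Proof.
  intros _ [Hn _] Hin [c1 [c2 [c3 [Hon HPQ]]]] Heps [sP [sQ [HsP [HsQ HA]]]] _ HSQ
    [r [delta [Hr [HBr [HBd HBc]]]]] [t1 [f1 [t2 [f2 [a (Ht1 & Hf1 & Ht2 & Hf2 & Ha & Hincl)]]]]].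
  destruct sqrt_facts as (S2 & S5 & S2p).
  assert (Hstep : forall i, (i < 3)%nat -> norm2 (Mm t1 f1 (P i)) < norm2 (Mm t2 f2 (Q i))).
  { intros i Hi. destruct (Hin i Hi) as [HPi HQi].
    eapply step_i with (Pl := Pl) (eps := eps) (th1 := th1) (ph1 := ph1) (th2 := th2) (ph2 := ph2)
      (al := al) (r := r) (delta := delta) (a := a); eauto. }
  set (sp := (-1)^sP). set (sq := (-1)^sQ).
  assert (Hsp : sp = 1 \/ sp = -1) by (apply pow_m1; auto).
  assert (Hsq : sq = 1 \/ sq = -1) by (apply pow_m1; auto).
  set (X1 := Xv t1 f1). set (X2 := Xv t2 f2).
  assert (HX1 : norm3 (sub3 X1 (Xv th1 ph1)) <= sqrt 2 * eps) by (apply X_lip; auto).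
  assert (HX2 : norm3 (sub3 X2 (Xv th2 ph2)) <= sqrt 2 * eps) by (apply X_lip; auto).
  assert (Hab : forall i, (i < 3)%nat -> sp * dot3 X1 (P i) > sq * dot3 X2 (Q i) /\ sq * dot3 X2 (Q i) > 0).
  { intros i Hi. destruct (Hin i Hi) as [HPi HQi]. destruct (HA i Hi) as [A1 A2]. fold sp sq in A1, A2.
    pose proof (Hn _ HPi) as nP. pose proof (Hn _ HQi) as nQ.
    pose proof (norm3_nn (P i)). pose proof (norm3_nn (Q i)).
    assert (E1 : dot3 X1 (P i) = dot3 (Xv th1 ph1) (P i) + dot3 (sub3 X1 (Xv th1 ph1)) (P i))
      by (destruct X1, (Xv th1 ph1), (P i); unfold dot3, sub3; simpl; ring).
    assert (E2 : dot3 X2 (Q i) = dot3 (Xv th2 ph2) (Q i) + dot3 (sub3 X2 (Xv th2 ph2)) (Q i))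
      by (destruct X2, (Xv th2 ph2), (Q i); unfold dot3, sub3; simpl; ring).
    pose proof (CS3 (sub3 X1 (Xv th1 ph1)) (P i)) as C1.
    pose proof (CS3 (sub3 X2 (Xv th2 ph2)) (Q i)) as C2.
    pose proof (norm3_nn (sub3 X1 (Xv th1 ph1))). pose proof (norm3_nn (sub3 X2 (Xv th2 ph2))).
    assert (norm3 (sub3 X1 (Xv th1 ph1)) * norm3 (P i) <= sqrt 2 * eps) by nra.
    assert (norm3 (sub3 X2 (Xv th2 ph2)) * norm3 (Q i) <= sqrt 2 * eps) by nra.
    apply abs_bounds in C1. apply abs_bounds in C2.
    assert (Pa : sp * dot3 X1 (P i) > 0) by (destruct Hsp as [-> | ->]; rewrite E1; nra).
    assert (Pb : sq * dot3 X2 (Q i) > 0) by (destruct Hsq as [-> | ->]; rewrite E2; nra).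
    split; auto.
    pose proof (Hstep i Hi) as St.
    pose proof (norm2_nn (Mm t1 f1 (P i))).
    assert (Sq : dot2 (Mm t1 f1 (P i)) (Mm t1 f1 (P i)) < dot2 (Mm t2 f2 (Q i)) (Mm t2 f2 (Q i)))
      by (rewrite <- !norm2_sq; nra).
    pose proof (projid t1 f1 (P i) (P i)) as J1. pose proof (projid t2 f2 (Q i) (Q i)) as J2.
    fold X1 in J1. fold X2 in J2.
    assert (EPQ : dot3 (P i) (P i) = dot3 (Q i) (Q i)) by (rewrite (HPQ i Hi); apply applyL_dot; auto).
    assert (Hss : sp * sp = 1) by (destruct Hsp as [-> | ->]; ring).
    assert (Hqq : sq * sq = 1) by (destruct Hsq as [-> | ->]; ring).
    assert ((sp * dot3 X1 (P i)) * (sp * dot3 X1 (P i)) > (sq * dot3 X2 (Q i)) * (sq * dot3 X2 (Q i))).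
    { replace ((sp * dot3 X1 (P i)) * (sp * dot3 X1 (P i))) with ((sp*sp) * (dot3 X1 (P i) * dot3 X1 (P i))) by ring.
      replace ((sq * dot3 X2 (Q i)) * (sq * dot3 X2 (Q i))) with ((sq*sq) * (dot3 X2 (Q i) * dot3 X2 (Q i))) by ring.
      rewrite Hss, Hqq. lra. }
    destruct (Rle_dec (sp * dot3 X1 (P i)) (sq * dot3 X2 (Q i))) as [Hle|Hle]; [|lra].
    exfalso. assert ((sp * dot3 X1 (P i)) * (sp * dot3 X1 (P i)) <= (sq * dot3 X2 (Q i)) * (sq * dot3 X2 (Q i)))
      by (apply Rmult_le_compat; lra). lra. }
  destruct HSQ as [HQn [Q01 [Q12 Q20]]].
  assert (Hcr : forall i j, (i < 3)%nat -> (j < 3)%nat ->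
     cross (Mm th2 ph2 (Q i)) (Mm th2 ph2 (Q j)) > 2 * eps * (sqrt 2 + eps) ->
     cross (Mm t2 f2 (Q i)) (Mm t2 f2 (Q j)) > 0).
  { intros i j Hi Hj Hc.
    pose proof (cross_transfer (Mm t2 f2 (Q i)) (Mm th2 ph2 (Q i)) (Mm t2 f2 (Q j)) (Mm th2 ph2 (Q j))) as T.
    pose proof (HQn i Hi). pose proof (HQn j Hj).
    pose proof (norm3_nn (Q i)). pose proof (norm3_nn (Q j)).
    pose proof (M_lip t2 f2 th2 ph2 eps (Q i) Ht2 Hf2).
    pose proof (M_lip t2 f2 th2 ph2 eps (Q j) Ht2 Hf2).
    pose proof (Mnorm_le th2 ph2 (Q j)). pose proof (Mnorm_le t2 f2 (Q i)).
    pose proof (norm2_nn (sub2 (Mm t2 f2 (Q i)) (Mm th2 ph2 (Q i)))).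
    pose proof (norm2_nn (sub2 (Mm t2 f2 (Q j)) (Mm th2 ph2 (Q j)))).
    pose proof (norm2_nn (Mm th2 ph2 (Q j))). pose proof (norm2_nn (Mm t2 f2 (Q i))).
    assert (0 <= sqrt 2 * eps) by nra.
    assert (norm2 (sub2 (Mm t2 f2 (Q i)) (Mm th2 ph2 (Q i))) <= sqrt 2 * eps) by nra.
    assert (norm2 (sub2 (Mm t2 f2 (Q j)) (Mm th2 ph2 (Q j))) <= sqrt 2 * eps) by nra.
    assert (norm2 (Mm th2 ph2 (Q j)) <= 1) by lra.
    assert (norm2 (Mm t2 f2 (Q i)) <= 1) by lra.
    assert (norm2 (sub2 (Mm t2 f2 (Q i)) (Mm th2 ph2 (Q i))) * norm2 (Mm th2 ph2 (Q j)) <= sqrt 2 * eps)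
      by (replace (sqrt 2 * eps) with (sqrt 2 * eps * 1) by ring; apply Rmult_le_compat; auto).
    assert (norm2 (Mm t2 f2 (Q i)) * norm2 (sub2 (Mm t2 f2 (Q j)) (Mm th2 ph2 (Q j))) <= sqrt 2 * eps)
      by (replace (sqrt 2 * eps) with (1 * (sqrt 2 * eps)) by ring; apply Rmult_le_compat; auto).
    nra. }
  pose proof (Hcr 0%nat 1%nat ltac:(lia) ltac:(lia) Q01).
  pose proof (Hcr 1%nat 2%nat ltac:(lia) ltac:(lia) Q12).
  pose proof (Hcr 2%nat 0%nat ltac:(lia) ltac:(lia) Q20).
  apply (core X2 (scal3 sp (LtX c1 c2 c3 X1)) sq Q t2 f2); auto.
  - destruct Hsq as [-> | ->]; ring.
  - assert (dot3 (scal3 sp (LtX c1 c2 c3 X1)) (scal3 sp (LtX c1 c2 c3 X1)) = sp * sp * dot3 (LtX c1 c2 c3 X1) (LtX c1 c2 c3 X1))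
      by (destruct (LtX c1 c2 c3 X1); unfold dot3, scal3; simpl; ring).
    rewrite H2. pose proof (bessel c1 c2 c3 X1 Hon). unfold X1 in H3. rewrite Xunit in H3. fold X1 in H3.
    assert (sp * sp = 1) by (destruct Hsp as [-> | ->]; ring). rewrite H4. lra.
  - intros i Hi. destruct (Hab i Hi) as [A1 A2].
    assert (dot3 (scal3 sp (LtX c1 c2 c3 X1)) (Q i) = sp * dot3 X1 (P i)).
    { rewrite (HPQ i Hi), <- LtX_dot. destruct (LtX c1 c2 c3 X1), (Q i); unfold dot3, scal3; simpl; ring. }
    assert (dot3 (scal3 sq X2) (Q i) = sq * dot3 X2 (Q i)) by (destruct X2, (Q i); unfold dot3, scal3; simpl; ring).
    rewrite H2, H3. auto.
Qed.
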